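(* Let $t$ be a positive integer and let $G$ be a finite group (not necessarily abelian, written additively) such that the smallest prime divisor $p$ of $|G|$ satisfies $p>t(2t+1)$. Let $M=[a_1^{\lambda_1},a_2^{\lambda_2}]$ be a multiset of non-identity elements of $G$ with $\lambda_1\ge 2t$. Then there exists a realization $W=(w_0,\dots,w_{\lambda_1+\lambda_2})$ of $M$ such that (a) $w_i=w_{i-1}+a_1$ for all $i\in\{1,\dots,t\}$; (b) $w_i=w_{i-1}+a_1$ for all $i\in\{\lambda_1+\lambda_2-(t-1),\dots,\lambda_1+\lambda_2\}$; (c) $w_i\ne w_j$ whenever $1\le|i-j|\le t$.
   Context: $[a_1^{\lambda_1},a_2^{\lambda_2}]$ denotes the multiset containing $a_1$ with multiplicity $\lambda_1$ and $a_2$ with multiplicity $\lambda_2$. For a multiset $M$, $\pm M$ denotes the multiset $[x,-x : x\in M]$ (each element of $M$ contributes both $x$ and $-x$, with multiplicity). A walk $W=(w_0,\dots,w_\ell)$ in $G$ has differences $\delta_i$ defined by $w_i=w_{i-1}+\delta_i$ ($1\le i\le\ell$), and $\Delta(W)=\pm[\delta_1,\dots,\delta_\ell]$. A realization of $M$ is a walk $W$ (in the Cayley graph $Cay[G:\pm M]$, vertices may repeat) with $\Delta(W)=\pm M$; equivalently, there is an ordering $(x_1,\dots,x_\ell)$ of $M$ and signs $\varepsilon_i\in\{\pm1\}$ with $w_i=w_{i-1}+\varepsilon_i x_i$. *)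

(* Defs.v *)
From mathcomp Require Import all_boot all_order all_fingroup.
Set Implicit Arguments. Unset Strict Implicit. Unset Printing Implicit Defensive.
Import GroupScope.
Local Open Scope group_scope.

(* The paper writes G additively; here G is a finGroupType written
   multiplicatively, so "w_i = w_{i-1} + d" becomes "w i = w i.-1 * d" and
   "-x" becomes "x^-1". *)

Definition mset2 (gT : finGroupType) (a1 a2 : gT) (l1 l2 : nat) : seq gT :=
  nseq l1 a1 ++ nseq l2 a2.

Definition realization (gT : finGroupType) (M : seq gT) (w : nat -> gT) : Prop :=
  exists (x : seq gT) (eps : nat -> bool),
    perm_eq x M /\
    forall i, 0 < i <= size M ->
      w i = w i.-1 * (if eps i then nth 1 x i.-1 else (nth 1 x i.-1)^-1).

(* Main.v *)
Require Import Defs.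
From mathcomp Require Import all_boot all_order all_fingroup.
From mathcomp Require Import cyclic zify.
From Stdlib Require Import Classical.
Import GroupScope.
Local Open Scope group_scope.

Section Aux.
Variable gT : finGroupType.

Lemma pow_neq1 (x : gT) k : x != 1 -> (0 < k < pdiv #|[set: gT]|)%N -> x ^+ k != 1.
Proof.
move=> Hx /andP[Hk Hp]; apply/negP => /eqP E.
have H1 : (#[x] %| k)%N by rewrite order_dvdn E.
have H2 : (1 < #[x])%N by rewrite order_gt1.
have H3 : (#[x] %| #|[set: gT]|)%N by apply: order_dvdG; rewrite inE.
have H4 := pdiv_min_dvd H2 H3.
have H5 := dvdn_leq Hk H1.
lia.
Qed.

Lemma mul_eq1C (x y : gT) : x * y = 1 -> y * x = 1.
Proof.
move=> E; have -> : y = x^-1 * (x * y) by rewrite mulKg.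
by rewrite E mulg1 mulVg.
Qed.

Lemma eq_mulr1 (y X : gT) : y = y * X -> X = 1.
Proof. by move/(congr1 (mulg y^-1)); rewrite mulKg mulVg => <-. Qed.

Variables (t : nat) (a1 a2 b : gT) (l1 l2 : nat) (s : bool).

Definition wf i := a1 ^+ minn i t * b ^+ minn (i - t) l2 * a1 ^+ (i - t - l2).
Definition df i := if (i <= t)%N || (t + l2 < i)%N then a1 else b.

Lemma w_step i : (0 < i)%N -> wf i = wf i.-1 * df i.
Proof.
case: i => // i _; rewrite [i.+1.-1]/= /wf /df.
have [H1|H1] : (i < t)%N \/ (t <= i)%N by lia.
  have -> : minn i.+1 t = (minn i t).+1 by lia.
  have -> : i.+1 - t = 0 by lia.
  have -> : i - t = 0 by lia.
  have -> : (i.+1 <= t)%N by lia.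
  by rewrite /= min0n sub0n !expg0 !mulg1 expgSr.
have [H2|H2] : (i < (t + l2))%N \/ ((t + l2) <= i)%N by lia.
  have -> : minn i.+1 t = minn i t by lia.
  have -> : minn (i.+1 - t) l2 = (minn (i - t) l2).+1 by lia.
  have -> : i.+1 - t - l2 = 0 by lia.
  have -> : i - t - l2 = 0 by lia.
  have -> : (i.+1 <= t)%N = false by lia.
  have -> : (t + l2 < i.+1)%N = false by lia.
  by rewrite /= !expg0 !mulg1 expgSr mulgA.
have -> : minn i.+1 t = minn i t by lia.
have -> : minn (i.+1 - t) l2 = minn (i - t) l2 by lia.
have -> : i.+1 - t - l2 = (i - t - l2).+1 by lia.
have -> : (t + l2 < i.+1)%N by lia.
by rewrite orbT expgSr !mulgA.
Qed.

Hypothesis Hb : b = if s then a2 else a2^-1.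
Hypothesis Hl : (2 * t <= l1)%N.
Hypothesis Ht : (0 < t)%N.
Hypothesis Hkey : forall u v, (0 < u + v <= t)%N -> b ^+ v * a1 ^+ u != 1.

Let x := nseq t a1 ++ nseq l2 a2 ++ nseq (l1 - t) a1.

Lemma nth_x k : (k < l1 + l2)%N ->
  nth 1 x k = if (k < t)%N || (t + l2 <= k)%N then a1 else a2.
Proof.
move=> Hk; rewrite /x nth_cat size_nseq.
case: ltnP => H1; first by rewrite nth_nseq H1.
rewrite nth_cat size_nseq.
case: ltnP => H2; first by rewrite nth_nseq H2; have -> : (t + l2 <= k)%N = false by lia.
rewrite nth_nseq; have -> : (k - t - l2 < l1 - t)%N by lia.
by have -> : (t + l2 <= k)%N by lia; rewrite orbT.
Qed.

Lemma construct : exists w : nat -> gT,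
    realization (mset2 a1 a2 l1 l2) w /\
    (forall i, (1 <= i <= t)%N -> w i = w i.-1 * a1) /\
    (forall i, (l1 + l2 - (t - 1) <= i <= l1 + l2)%N -> w i = w i.-1 * a1) /\
    (forall i j, (i < j)%N -> (j <= i + t)%N -> (j <= l1 + l2)%N ->
       w i != w j).
Proof.
exists wf; split; last split; last split.
- exists x, (fun i => (i <= t)%N || (t + l2 < i)%N || s); split.
    rewrite /x /mset2.
    rewrite perm_catCA.
    rewrite -nseqD subnKC; last by lia.
    by rewrite perm_catC.
  move=> i; rewrite size_cat !size_nseq => /andP[Hi1 Hi2].
  rewrite w_step // /df nth_x; last by lia.
  have [H1|[H1|H1]] : (i <= t)%N \/ (t < i <= t + l2)%N \/ (t + l2 < i)%N by lia.
  - by rewrite H1 (_ : (i.-1 < t)%N = true) //; lia.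
  - rewrite (_ : (i <= t)%N = false); last by lia.
    rewrite (_ : (t + l2 < i)%N = false); last by lia.
    rewrite (_ : (i.-1 < t)%N = false); last by lia.
    rewrite (_ : (t + l2 <= i.-1)%N = false); last by lia.
    by rewrite /= Hb; case: s.
  - by rewrite H1 (_ : (t + l2 <= i.-1)%N = true) ?orbT //; lia.
- move=> i /andP[H1 H2]; rewrite w_step // /df; by have -> : (i <= t)%N by [].
- move=> i /andP[H1 H2]; rewrite w_step; last by lia.
  rewrite /df (_ : (t + l2 < i)%N = true) ?orbT //; lia.
move=> i j Hij Hjt Hjn; apply/negP => /eqP E; move: E; rewrite /wf.
have [Hi|Hi] : (i < t)%N \/ (t <= i)%N by lia.
- have -> : minn i t = i by lia.
  have -> : i - t = 0 by lia.
  rewrite min0n sub0n !expg0 !mulg1.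
  have [Hj|Hj] : (j <= (t + l2))%N \/ ((t + l2) < j)%N by lia.
  + have -> : j - t - l2 = 0 by lia.
    rewrite expg0 mulg1.
    have -> : minn j t = i + (minn j t - i) by lia.
    rewrite expgD -mulgA => /eq_mulr1 /mul_eq1C /eqP.
    apply/negP/Hkey; lia.
  + have -> : minn j t = i + (t - i) by lia.
    have -> : minn (j - t) l2 = l2 by lia.
    rewrite expgD -!mulgA => /eq_mulr1.
    move=> /mul_eq1C; rewrite -mulgA -expgD => /eqP.
    apply/negP/Hkey; lia.
- have -> : minn i t = t by lia.
  have -> : minn j t = t by lia.
  have [Hi2|Hi2] : (i <= (t + l2))%N \/ ((t + l2) < i)%N by lia.
  + have -> : i - t - l2 = 0 by lia.
    rewrite expg0 mulg1.
    have [Hj|Hj] : (j <= (t + l2))%N \/ ((t + l2) < j)%N by lia.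
    * have -> : j - t - l2 = 0 by lia.
      have -> : minn (j - t) l2 = minn (i - t) l2 + (j - i) by lia.
      rewrite expg0 mulg1 expgD mulgA => /eq_mulr1 /eqP.
      rewrite -(mulg1 (b ^+ (j - i))) -(expg0 a1).
      apply/negP/Hkey; lia.
    * have -> : minn (j - t) l2 = minn (i - t) l2 + (t + l2 - i) by lia.
      rewrite expgD !mulgA -(mulgA (a1 ^+ t * b ^+ minn (i - t) l2)) => /eq_mulr1 /eqP.
      apply/negP/Hkey; lia.
  + have -> : minn (j - t) l2 = minn (i - t) l2 by lia.
    have -> : j - t - l2 = (i - t - l2) + (j - i) by lia.
    rewrite expgD mulgA => /eq_mulr1 /eqP.
    rewrite -(mul1g (a1 ^+ (j - i))) -(expg0 b).
    apply/negP/Hkey; lia.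
Qed.

End Aux.

Theorem proposition3p2 (gT : finGroupType) (t : nat) (a1 a2 : gT) (l1 l2 : nat) :
  0 < t ->
  (t * (2 * t + 1) < pdiv #|[set: gT]|)%N ->
  a1 != 1 -> a2 != 1 ->
  (2 * t <= l1)%N ->
  exists w : nat -> gT,
    realization (mset2 a1 a2 l1 l2) w /\
    (forall i, (1 <= i <= t)%N -> w i = w i.-1 * a1) /\
    (forall i, (l1 + l2 - (t - 1) <= i <= l1 + l2)%N -> w i = w i.-1 * a1) /\
    (forall i j, (i < j)%N -> (j <= i + t)%N -> (j <= l1 + l2)%N ->
       w i != w j).
Proof.
move=> Ht Hp Ha1 Ha2 Hl.
have Pa1 : forall u, (0 < u <= t)%N -> a1 ^+ u != 1.
  move=> u Hu; apply: pow_neq1 => //; nia.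
have Pa2 : forall v, (0 < v <= t)%N -> a2 ^+ v != 1.
  move=> v Hv; apply: pow_neq1 => //; nia.
have gen : forall b : gT, (forall v, (0 < v <= t)%N -> b ^+ v != 1) ->
    (forall u v, (0 < u)%N -> (0 < v)%N -> (u + v <= t)%N -> b ^+ v * a1 ^+ u != 1) ->
    forall u v, (0 < u + v <= t)%N -> b ^+ v * a1 ^+ u != 1.
  move=> b Pb Pbv u v Huv.
  have [Hu|Hu] : u = 0 \/ (0 < u)%N by lia.
    by subst u; rewrite expg0 mulg1; apply: Pb; lia.
  have [Hv|Hv] : v = 0 \/ (0 < v)%N by lia.
    by subst v; rewrite expg0 mul1g; apply: Pa1; lia.
  apply: Pbv => //; lia.
case: (classic (exists u v, (0 < u)%N /\ (0 < v)%N /\ (u + v <= t)%N /\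
                               a2 ^+ v * a1 ^+ u = 1)) => [[u0 [v0 [Hu0 [Hv0 [Huv0 E0]]]]]|N].
- apply: (@construct gT t a1 a2 a2^-1 l1 l2 false) => //.
  apply: gen.
    by move=> v Hv; rewrite expVgn invg_eq1; apply: Pa2.
  move=> u v Hu Hv Huv; apply/negP => /eqP E.
  have E0' : a2 ^+ v0 = (a1 ^+ u0)^-1.
    by rewrite -(mulg1 (a2 ^+ v0)) -(mulgV (a1 ^+ u0)) mulgA E0 mul1g.
  have E' : a2 ^+ v = a1 ^+ u.
    by rewrite -(invgK (a2 ^+ v)) -expVgn -(mulg1 (a2^-1 ^+ v)) -(mulgV (a1 ^+ u)) mulgA E mul1g invgK.
  have : a1 ^+ (u0 * v + u * v0) = 1.
    have H1 : a2 ^+ (v0 * v) = (a1 ^+ (u0 * v))^-1 by rewrite expgnA E0' expgnA expVgn.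
    have H2 : a2 ^+ (v0 * v) = a1 ^+ (u * v0) by rewrite mulnC expgnA E' expgnA.
    by rewrite expgD -H2 H1 mulgV.
  apply/eqP; apply: pow_neq1 => //; nia.
- apply: (@construct gT t a1 a2 a2 l1 l2 true) => //.
  apply: gen => // u v Hu Hv Huv; apply/eqP => E; apply: N.
  by exists u, v.
Qed.
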